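(* Let $A=[a_{ij}]\in N_n$ and let $(i,j)$ with $a_{ij}\neq0$. If there exist $\lambda\in\mathbb F$ and $1\le p<q\le n$ such that the $(i,j)$ entry of $\mathcal O_{p,q}^\lambda(A)$ is $0$, then one of the following holds: (1) there is $p'$ with $i<p'<j$ and $a_{ip'}\neq0$; in this case $\mathcal O_{p',j}^{\mu}(A)$ with $\mu=a_{ij}/a_{ip'}$ has $(i,j)$ entry $0$; (2) there is $q'$ with $i<q'<j$ and $a_{q'j}\neq0$; in this case $\mathcal O_{i,q'}^{\mu}(A)$ with $\mu=-a_{ij}/a_{q'j}$ has $(i,j)$ entry $0$.
   Context: $\mathbb F$ is a field; $N_n$ is the set of strictly upper triangular $n\times n$ matrices over $\mathbb F$; $E_{pq}$ is the matrix unit. For $\lambda\in\mathbb F$ and $1\le p<q\le n$, the elementary $U_n$-similarity operation is $\mathcal O_{p,q}^\lambda(X)=(I_n+\lambda E_{pq})X(I_n+\lambda E_{pq})^{-1}$ for $X\in N_n$. (In graph language: the arc $(i,j)$ of the graph of $A$, whose arcs are the positions of nonzero entries, can be eliminated by such an operation only in the two cases listed.) *)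

(* Defs.v *)
From mathcomp Require Import all_boot all_algebra.
Set Implicit Arguments. Unset Strict Implicit. Unset Printing Implicit Defensive.
Import GRing.Theory.
Local Open Scope ring_scope.

Definition strictly_upper (F : fieldType) (n : nat) (A : 'M[F]_n) : Prop :=
  forall i j : 'I_n, (j <= i)%N -> A i j = 0.

Definition elem_sim (F : fieldType) (n : nat) (lam : F) (p q : 'I_n)
    (X : 'M[F]_n) : 'M[F]_n :=
  (1%:M + lam *: delta_mx p q) *m X *m invmx (1%:M + lam *: delta_mx p q).

(* Main.v *)
Require Import Defs.
From mathcomp Require Import all_boot all_algebra.
From mathcomp Require Import ring.
Import GRing.Theory.
Local Open Scope ring_scope.

Lemma dl (F : fieldType) n (p q i j : 'I_n) (B : 'M[F]_n) :
  (delta_mx p q *m B) i j = if i == p then B q j else 0.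
Proof.
rewrite mxE (bigD1 q) //= big1 ?addr0; last first.
  by move=> k /negbTE kq; rewrite mxE kq andbF mul0r.
by rewrite mxE eqxx andbT; case: (i == p); rewrite ?mul1r ?mul0r.
Qed.

Lemma dr (F : fieldType) n (p q i j : 'I_n) (B : 'M[F]_n) :
  (B *m delta_mx p q) i j = if j == q then B i p else 0.
Proof.
rewrite mxE (bigD1 p) //= big1 ?addr0; last first.
  by move=> k /negbTE kq; rewrite mxE kq mulr0.
by rewrite mxE eqxx /=; case: (j == q); rewrite ?mulr1 ?mulr0.
Qed.

Lemma dl' (F : fieldType) n (p q i j : 'I_n) (B : 'M[F]_n) :
  \sum_k delta_mx p q i k * B k j = if i == p then B q j else 0.
Proof. by rewrite -dl mxE. Qed.

Lemma dr' (F : fieldType) n (p q i j : 'I_n) (B : 'M[F]_n) :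
  \sum_k B i k * delta_mx p q k j = if j == q then B i p else 0.
Proof. by rewrite -dr mxE. Qed.

Lemma entry (F : fieldType) n (A : 'M[F]_n) lam (p q i j : 'I_n) :
  strictly_upper A -> (p < q)%N ->
  elem_sim lam p q A i j =
  A i j + lam * (if i == p then A q j else 0) - lam * (if j == q then A i p else 0).
Proof.
move=> up pq.
have pnq : (q == p) = false by apply/negbTE; rewrite neq_ltn pq orbT.
set E := (delta_mx p q : 'M[F]_n).
have EE : E *m E = 0 by rewrite /E mul_delta_mx_cond pnq.
have MN : (1%:M + lam *: E) *m (1%:M - lam *: E) = 1%:M.
  rewrite mulmxDl !mulmxBr !mul1mx !mulmx1 -!scalemxAl -!scalemxAr EE !scaler0 subr0; exact: subrK.
have inv : invmx (1%:M + lam *: E) = 1%:M - lam *: E.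
  have [uM _] := mulmx1_unit MN.
  by rewrite -[RHS](mulKmx uM) MN mulmx1.
rewrite /elem_sim -/E inv.
rewrite mulmxDl mul1mx -scalemxAl mulmxBr mulmx1 mulmxDl -!scalemxAr -scalemxAl.
rewrite !mxE !dr' dl' dl.
have Aqp : A q p = 0 by apply: up; exact: ltnW.
rewrite Aqp; case: (i == p); case: (j == q); rewrite ?mulr0 ?subr0 ?addr0 //; rewrite ?subr0; reflexivity.
Qed.

Lemma nz_lt (F : fieldType) n (A : 'M[F]_n) (x y : 'I_n) :
  strictly_upper A -> A x y != 0 -> (x < y)%N.
Proof. by move=> up; apply: contraR; rewrite -leqNgt => /up ->; rewrite eqxx. Qed.

Theorem lemma3p4 (F : fieldType) (n : nat) (A : 'M[F]_n) (i j : 'I_n) :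
  strictly_upper A -> A i j != 0 ->
  (exists (lam : F) (p q : 'I_n), (p < q)%N /\ elem_sim lam p q A i j = 0) ->
  (exists p' : 'I_n, [/\ (i < p')%N, (p' < j)%N, A i p' != 0 &
      elem_sim (A i j / A i p') p' j A i j = 0])
  \/
  (exists q' : 'I_n, [/\ (i < q')%N, (q' < j)%N, A q' j != 0 &
      elem_sim (- (A i j / A q' j)) i q' A i j = 0]).
Proof.
move=> up nz [lam [p [q [pq]]]]; rewrite entry // => H.
have [/andP [/eqP ip Aqj] | h1] := boolP ((i == p) && (A q j != 0)).
  subst p; right; exists q.
  have qj := nz_lt _ _ _ _ _ up Aqj.
  have jq : (j == q) = false by apply/negbTE; rewrite neq_ltn qj orbT.
  split=> //; rewrite entry // eqxx jq mulr0 subr0.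
  by field.
have [/andP [/eqP jq Aip] | h2] := boolP ((j == q) && (A i p != 0)).
  subst q; left; exists p.
  have ip := nz_lt _ _ _ _ _ up Aip.
  have ip' : (i == p) = false by apply/negbTE; rewrite neq_ltn ip.
  split=> //; rewrite entry // eqxx ip' mulr0 addr0.
  by field.
exfalso; move: H.
have -> : (if i == p then A q j else 0) = 0.
  by case: (i == p) h1 => //=; rewrite negbK => /eqP.
have -> : (if j == q then A i p else 0) = 0.
  by case: (j == q) h2 => //=; rewrite negbK => /eqP.
by rewrite !mulr0 addr0 subr0 => /eqP; rewrite (negbTE nz).
Qed.
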